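(* Let $P$ be a power quandle and $G=\mathrm{Gr}(P)$. Then $\mathrm{Gr}(\mathrm{Pq}(G))\cong G\times\mathrm{A}(G)$ as groups, where $\mathrm{A}(G)$ is the kernel of $\epsilon\colon\mathrm{Gr}(\mathrm{Pq}(G))\to G$.
   Context: A power quandle $(P,\rhd,\pi,e)$ consists of a set $P$, a binary operation $\rhd$, an element $e$, and maps $\pi^n\colon P\to P$ ($n\in\mathbb{Z}$) satisfying: each $\lambda_a\colon b\mapsto a\rhd b$ is bijective and $a\rhd(b\rhd c)=(a\rhd b)\rhd(a\rhd c)$; $a\rhd a=a$; $e\rhd b=b$, $a\rhd e=e$; $\pi^1=\mathrm{id}$, $\pi^m\circ\pi^n=\pi^{mn}$; $\pi^0(a)=e$; $a\rhd\pi^n(b)=\pi^n(a\rhd b)$; $\pi^n(a)\rhd b=\lambda_a^n(b)$. For a group $G$, $\mathrm{Pq}(G)$ is the power quandle with $a\rhd b=aba^{-1}$, $\pi^n(a)=a^n$, unit the identity. For a power quandle $P$, $\mathrm{Gr}(P)$ is the group with generators $\sigma(a)$, $a\in P$, and relations $\sigma(a\rhd b)=\sigma(a)\sigma(b)\sigma(a)^{-1}$, $\sigma(\pi^n(a))=\sigma(a)^n$, $\sigma(e)=1$. For a group $G$, $\epsilon\colon\mathrm{Gr}(\mathrm{Pq}(G))\to G$ is the homomorphism with $\epsilon(\sigma(a))=a$. *)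

(* Defs.v *)
From Stdlib Require Import ZArith.
Set Implicit Arguments.

Record Group := MkGroup {
  gcar :> Type;
  gmul : gcar -> gcar -> gcar;
  gone : gcar;
  ginv : gcar -> gcar;
  gmulA : forall x y z, gmul x (gmul y z) = gmul (gmul x y) z;
  gmul1l : forall x, gmul gone x = x;
  gmul1r : forall x, gmul x gone = x;
  gmulVl : forall x, gmul (ginv x) x = gone;
  gmulVr : forall x, gmul x (ginv x) = gone
}.

Arguments gmul {g} _ _.
Arguments ginv {g} _.

Definition gpow {G : Group} (x : G) (n : Z) : G :=
  if (0 <=? n)%Z then Nat.iter (Z.to_nat n) (gmul x) (gone G)
  else Nat.iter (Z.to_nat (- n)) (gmul (ginv x)) (gone G).

Definition is_hom {G H : Group} (f : G -> H) : Prop :=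
  forall x y, f (gmul x y) = gmul (f x) (f y).

(** Power quandles.  Bijectivity of lambda_a is given by a two-sided inverse
    [qlinv a]; lambda_a^n for n in Z is iteration of lambda_a or its inverse. *)
Definition lam_pow {P : Type} (op linv : P -> P -> P) (a : P) (n : Z) (b : P) : P :=
  if (0 <=? n)%Z then Nat.iter (Z.to_nat n) (op a) b
  else Nat.iter (Z.to_nat (- n)) (linv a) b.

Record PowerQuandle := MkPQ {
  qcar :> Type;
  qop : qcar -> qcar -> qcar;
  qpi : Z -> qcar -> qcar;
  qe : qcar;
  qlinv : qcar -> qcar -> qcar;
  qlinvK : forall a b, qlinv a (qop a b) = b;
  qopK : forall a b, qop a (qlinv a b) = b;
  qdistr : forall a b c, qop a (qop b c) = qop (qop a b) (qop a c);
  qidem : forall a, qop a a = a;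
  qe_l : forall b, qop qe b = b;
  qe_r : forall a, qop a qe = qe;
  qpi1 : forall a, qpi 1%Z a = a;
  qpiM : forall m n a, qpi m (qpi n a) = qpi (m * n)%Z a;
  qpi0 : forall a, qpi 0%Z a = qe;
  qop_pi : forall n a b, qop a (qpi n b) = qpi n (qop a b);
  qpi_op : forall n a b, qop (qpi n a) b = lam_pow qop qlinv a n b
}.

Arguments qop {p} _ _.
Arguments qpi {p} _ _.
Arguments qlinv {p} _ _.

Definition gr_rel (X : Type) (op : X -> X -> X) (pi : Z -> X -> X) (e : X)
    {H : Group} (f : X -> H) : Prop :=
  (forall a b, f (op a b) = gmul (gmul (f a) (f b)) (ginv (f a))) /\
  (forall n a, f (pi n a) = gpow (f a) n) /\
  f e = gone H.

(** (G, sigma) is the group Gr with generators sigma(a), a in X, and the above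
    relations, characterized (up to isomorphism) by its universal property. *)
Definition IsGr (X : Type) (op : X -> X -> X) (pi : Z -> X -> X) (e : X)
    {G : Group} (sigma : X -> G) : Prop :=
  gr_rel op pi e sigma /\
  forall (H : Group) (f : X -> H), gr_rel op pi e f ->
    (exists phi : G -> H, is_hom phi /\ forall a, phi (sigma a) = f a) /\
    (forall phi1 phi2 : G -> H, is_hom phi1 -> is_hom phi2 ->
       (forall a, phi1 (sigma a) = phi2 (sigma a)) -> forall x, phi1 x = phi2 x).

Definition pq_op {G : Group} (a b : G) : G := gmul (gmul a b) (ginv a).
Definition pq_pi {G : Group} (n : Z) (a : G) : G := gpow a n.

(** K is isomorphic, as a group, to the direct product G x ker(eps), where
    ker(eps) = {x in K | eps x = 1} with the group law of K: given by a pair of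
    homomorphisms phi1 : K -> G, phi2 : K -> K with phi2 landing in ker(eps),
    such that x |-> (phi1 x, phi2 x) is a bijection K -> G x ker(eps). *)
Definition iso_prod_kernel {K G : Group} (eps : K -> G) : Prop :=
  exists (phi1 : K -> G) (phi2 : K -> K),
    is_hom phi1 /\ is_hom phi2 /\
    (forall x, eps (phi2 x) = gone G) /\
    (forall x y, phi1 x = phi1 y -> phi2 x = phi2 y -> x = y) /\
    (forall (g : G) (k : K), eps k = gone G -> exists x, phi1 x = g /\ phi2 x = k).

(* Main.v *)
Require Import Defs.
From Stdlib Require Import ZArith ProofIrrelevance.
Arguments gmulA {g}.
Arguments gmul1l {g}.
Arguments gmul1r {g}.
Arguments gmulVl {g}.
Arguments gmulVr {g}.

Lemma sig_eq_pi {A : Type} (Q : A -> Prop) (x y : {a | Q a}) :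
  proj1_sig x = proj1_sig y -> x = y.
Proof. destruct x, y; simpl; intros ->; f_equal; apply proof_irrelevance. Qed.

Definition subG (K : Group) (Q : K -> Prop)
  (Hm : forall x y, Q x -> Q y -> Q (gmul x y)) (H1 : Q (gone K))
  (Hi : forall x, Q x -> Q (ginv x)) : Group.
Proof.
  refine (@MkGroup {x | Q x}
    (fun x y => exist _ (gmul (proj1_sig x) (proj1_sig y)) (Hm _ _ (proj2_sig x) (proj2_sig y)))
    (exist _ (gone K) H1)
    (fun x => exist _ (ginv (proj1_sig x)) (Hi _ (proj2_sig x))) _ _ _ _ _);
  intros; apply sig_eq_pi; simpl.
  - apply gmulA.
  - apply gmul1l.
  - apply gmul1r.
  - apply gmulVl.
  - apply gmulVr.
Defined.

Lemma subG_iter (K : Group) Q Hm H1 Hi (y z : gcar (@subG K Q Hm H1 Hi)) m :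
  proj1_sig (Nat.iter m (gmul y) z) = Nat.iter m (gmul (proj1_sig y)) (proj1_sig z).
Proof.
  induction m as [|m IH]; [reflexivity|].
  change (proj1_sig (gmul y (Nat.iter m (gmul y) z)) = gmul (proj1_sig y) (Nat.iter m (gmul (proj1_sig y)) (proj1_sig z))).
  rewrite <- IH. reflexivity.
Qed.

Lemma subG_pow (K : Group) Q Hm H1 Hi (y : gcar (@subG K Q Hm H1 Hi)) n :
  proj1_sig (gpow y n) = gpow (proj1_sig y) n.
Proof. unfold gpow; destruct (0 <=? n)%Z; rewrite subG_iter; reflexivity. Qed.

Lemma gr_ind (X : Type) (op : X -> X -> X) (pi : Z -> X -> X) (e : X)
  (K : Group) (tau : X -> K) (HK : IsGr op pi e tau) (Q : K -> Prop)
  (Hm : forall x y, Q x -> Q y -> Q (gmul x y)) (H1 : Q (gone K))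
  (Hi : forall x, Q x -> Q (ginv x)) (Ht : forall a, Q (tau a)) :
  forall x, Q x.
Proof.
  destruct HK as [[R1 [R2 R3]] U].
  set (S := @subG K Q Hm H1 Hi).
  set (f := fun a => exist Q (tau a) (Ht a) : gcar S).
  assert (Hf : gr_rel op pi e f).
  { split; [|split].
    - intros a b; apply sig_eq_pi; simpl; apply R1.
    - intros n a; apply sig_eq_pi. transitivity (gpow (proj1_sig (f a)) n); [simpl; apply R2 | symmetry; exact (@subG_pow K Q Hm H1 Hi (f a) n)].
    - apply sig_eq_pi; simpl; apply R3. }
  destruct (U S f Hf) as [[psi [Hpsi Hpsia]] _].
  destruct (U K tau (conj R1 (conj R2 R3))) as [_ Uniq].
  intro x.
  assert (E : proj1_sig (psi x) = x).
  { apply (Uniq (fun y => proj1_sig (psi y)) (fun y => y)).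
    - intros u v; rewrite Hpsi; reflexivity.
    - intros u v; reflexivity.
    - intro a; rewrite Hpsia; reflexivity. }
  rewrite <- E; apply proj2_sig.
Qed.

Section GA.
Variable H : Group.
Lemma inv_uniq (a b : H) : gmul a b = gone H -> b = ginv a.
Proof.
  intro E. rewrite <- (gmul1l b), <- (gmulVl a), <- gmulA, E, gmul1r. reflexivity.
Qed.
Lemma ginv_mul (x y : H) : ginv (gmul x y) = gmul (ginv y) (ginv x).
Proof.
  symmetry; apply inv_uniq.
  rewrite <- gmulA, (gmulA y), gmulVr, gmul1l, gmulVr. reflexivity.
Qed.
Lemma ginv_inv (x : H) : ginv (ginv x) = x.
Proof. symmetry; apply inv_uniq; apply gmulVl. Qed.
Lemma ginv_one : ginv (gone H) = gone H.
Proof. symmetry; apply inv_uniq; apply gmul1l. Qed.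
Lemma conj_mul (x y z : H) : gmul (gmul (gmul x y) z) (ginv (gmul x y)) = gmul (gmul x (gmul (gmul y z) (ginv y))) (ginv x).
Proof. rewrite ginv_mul, !gmulA. reflexivity. Qed.
Lemma conj_cancel (x z : H) : gmul (gmul (ginv x) (gmul (gmul x z) (ginv x))) (ginv (ginv x)) = z.
Proof. rewrite ginv_inv, !gmulA, gmulVl, gmul1l, <- gmulA, gmulVl, gmul1r. reflexivity. Qed.
Lemma conj_one (z : H) : gmul (gmul (gone H) z) (ginv (gone H)) = z.
Proof. rewrite ginv_one, gmul1l, gmul1r. reflexivity. Qed.
Lemma comm_inv (k x : H) : gmul k x = gmul x k -> gmul k (ginv x) = gmul (ginv x) k.
Proof.
  intro E. rewrite <- (gmul1l (gmul k (ginv x))), <- (gmulVl x), <- gmulA, (gmulA x), <- E.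
  rewrite <- gmulA, gmulVr, gmul1r. reflexivity.
Qed.
End GA.

Lemma hom_one {A B : Group} (f : A -> B) : is_hom f -> f (gone A) = gone B.
Proof.
  intro Hf. assert (E : f (gone A) = gmul (f (gone A)) (f (gone A))).
  { rewrite <- Hf, gmul1l; reflexivity. }
  rewrite <- (gmul1l (f (gone A))), <- (gmulVl (f (gone A))), <- gmulA, <- E, gmulVl.
  reflexivity.
Qed.

Lemma hom_inv {A B : Group} (f : A -> B) : is_hom f -> forall x, f (ginv x) = ginv (f x).
Proof.
  intros Hf x.
  rewrite <- (gmul1r (f (ginv x))), <- (gmulVr (f x)), gmulA, <- Hf, gmulVl, hom_one, gmul1l
    by exact Hf. reflexivity.
Qed.

Theorem mainTheorem13
  (P : PowerQuandle)
  (G : Group) (sigma : P -> G)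
  (HG : @IsGr P qop qpi (qe P) G sigma)
  (K : Group) (tau : G -> K)
  (HK : @IsGr G pq_op pq_pi (gone G) K tau)
  (eps : K -> G) (Heps_hom : is_hom eps) (Heps : forall a, eps (tau a) = a) :
  iso_prod_kernel eps.
Proof.
  pose proof HK as HK'.
  destruct HK' as [[R1 [R2 R3]] _].
  pose proof HG as HG'.
  destruct HG' as [[S1 [S2 S3]] UG].
  assert (Hf : gr_rel qop qpi (qe P) (fun a => tau (sigma a))).
  { split; [|split].
    - intros a b; rewrite S1; apply R1.
    - intros n a; rewrite S2; apply R2.
    - rewrite S3; apply R3. }
  destruct (UG K _ Hf) as [[s [Hs Hsa]] _].
  assert (Hes : forall g, eps (s g) = g).
  { destruct (UG G sigma (conj S1 (conj S2 S3))) as [_ Uniq].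
    intro g; apply (Uniq (fun g => eps (s g)) (fun g => g)).
    - intros u v; rewrite Hs, Heps_hom; reflexivity.
    - intros u v; reflexivity.
    - intro a; rewrite Hsa, Heps; reflexivity. }
  assert (Conj : forall x h, gmul (gmul x (tau h)) (ginv x) = tau (pq_op (eps x) h)).
  { apply (@gr_ind _ _ _ _ _ _ HK (fun x => forall h, gmul (gmul x (tau h)) (ginv x) = tau (pq_op (eps x) h))).
    - intros x y Hx Hy h.
      rewrite conj_mul, Hy, Hx, Heps_hom. unfold pq_op. rewrite conj_mul. reflexivity.
    - intro h. rewrite conj_one, (hom_one eps Heps_hom). unfold pq_op. rewrite conj_one. reflexivity.
    - intros x Hx h. rewrite (hom_inv eps Heps_hom).
      set (h' := pq_op (ginv (eps x)) h).
      assert (E : tau h = gmul (gmul x (tau h')) (ginv x)).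
      { rewrite Hx. unfold h', pq_op. f_equal.
        pose proof (conj_cancel _ (ginv (eps x)) h) as C. rewrite !ginv_inv in C. rewrite ?ginv_inv. symmetry; exact C. }
      rewrite E, conj_cancel. reflexivity.
    - intros a h. rewrite Heps; symmetry; apply R1. }
  assert (Cent : forall k, eps k = gone G -> forall y, gmul k y = gmul y k).
  { intros k Hk.
    apply (@gr_ind _ _ _ _ _ _ HK (fun y => gmul k y = gmul y k)).
    - intros x y Hx Hy. rewrite gmulA, Hx, <- gmulA, Hy, gmulA. reflexivity.
    - rewrite gmul1l, gmul1r. reflexivity.
    - intros x Hx. apply comm_inv; exact Hx.
    - intro a. transitivity (gmul (gmul (gmul k (tau a)) (ginv k)) k).
      { rewrite <- gmulA, gmulVl, gmul1r. reflexivity. }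
      rewrite Conj, Hk. unfold pq_op. rewrite conj_one. reflexivity. }
  set (phi2 := fun x => gmul (ginv (s (eps x))) x).
  assert (Hker : forall x, eps (phi2 x) = gone G).
  { intro x; unfold phi2. rewrite Heps_hom, (hom_inv eps Heps_hom), Hes, gmulVl. reflexivity. }
  exists eps, phi2. split; [exact Heps_hom|]. split; [|split; [exact Hker|split]].
  - intros x y. unfold phi2. rewrite Heps_hom, Hs, ginv_mul.
    rewrite (gmulA (gmul (ginv (s (eps x))) x)).
    change (gmul (ginv (s (eps x))) x) with (phi2 x).
    rewrite (Cent (phi2 x) (Hker x) (ginv (s (eps y)))). unfold phi2.
    rewrite !gmulA. reflexivity.
  - intros x y Ex Ey. unfold phi2 in Ey. rewrite Ex in Ey.
    rewrite <- (gmul1l x), <- (gmulVr (s (eps y))), <- gmulA, Ey, gmulA, gmulVr, gmul1l.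
    reflexivity.
  - intros g k Hk. exists (gmul (s g) k). split.
    + rewrite Heps_hom, Hes, Hk, gmul1r. reflexivity.
    + unfold phi2. rewrite Heps_hom, Hes, Hk, gmul1r, gmulA, gmulVl, gmul1l. reflexivity.
Qed.
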